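(* For a set $\mathcal{R}$ of languages over $\Sigma$ and a regular language $R\subseteq\Sigma^*$ let $\mathcal{R}\,\dot\cup\,R=\{L\cup R\mid L\in\mathcal{R}\}$. (1) There exist a rational set of regular languages $\mathcal{R}$ and a regular language $R$ such that $\mathcal{R}\,\dot\cup\,R$ is not a rational set of regular languages. (2) If $\mathcal{R}$ is a finite rational set of regular languages and $R$ is regular, then $\mathcal{R}\,\dot\cup\,R$ is a rational set of regular languages. (3) In the latter case a different language substitution is in general required: there exist an alphabet $\Delta$, a regular language substitution $\varphi:\Delta\to2^{\Sigma^*}$, a regular $K\subseteq\Delta^+$ with $\mathcal{R}=(K,\varphi)$ finite, and a regular $R\subseteq\Sigma^*$ such that there is no regular $K'\subseteq\Delta^+$ with $\mathcal{R}\,\dot\cup\,R=(K',\varphi)$.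
   Context: Alphabets are nonempty finite sets. A regular language substitution $\varphi:\Delta\to2^{\Sigma^*}$ maps each symbol to a regular language over $\Sigma$, extended by $\varphi(\delta w)=\varphi(\delta)\varphi(w)$. A set $\mathcal{R}$ of regular languages over $\Sigma$ is a rational set of regular languages, written $\mathcal{R}=(K,\varphi)$, if there are an alphabet $\Delta$, a regular $K\subseteq\Delta^+$ and a regular language substitution $\varphi$ with $\mathcal{R}=\{\varphi(w)\mid w\in K\}$. *)

(* Defs.v *)
From mathcomp Require Import all_boot.
Set Implicit Arguments. Unset Strict Implicit. Unset Printing Implicit Defensive.

Definition lang (A : finType) := seq A -> Prop.

Record dfa (A : finType) := DFA {
  dfa_state : finType;
  dfa_s0 : dfa_state;
  dfa_fin : dfa_state -> bool;
  dfa_trans : dfa_state -> A -> dfa_state }.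

Definition dfa_accept (A : finType) (M : dfa A) (w : seq A) : bool :=
  @dfa_fin A M (foldl (@dfa_trans A M) (@dfa_s0 A M) w).

Definition regular (A : finType) (L : lang A) : Prop :=
  exists M : dfa A, forall w, L w <-> dfa_accept M w.

Definition lang_union (A : finType) (L1 L2 : lang A) : lang A :=
  fun w => L1 w \/ L2 w.

Definition lang_conc (A : finType) (L1 L2 : lang A) : lang A :=
  fun w => exists u v, w = u ++ v /\ L1 u /\ L2 v.

Definition lang_eps (A : finType) : lang A := fun w => w = [::].

Definition subst_word (D S : finType) (phi : D -> lang S) (w : seq D) : lang S :=
  foldr (fun d L => lang_conc (phi d) L) (@lang_eps S) w.

Definition regular_subst (D S : finType) (phi : D -> lang S) : Prop :=
  forall d, regular (phi d).

Definition nonempty_words (D : finType) (K : lang D) : Prop :=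
  forall w, K w -> w <> [::].

Definition image_set (D S : finType) (K : lang D) (phi : D -> lang S)
  : lang S -> Prop :=
  fun L => exists w, K w /\ L = subst_word phi w.

Definition represents (D S : finType) (K : lang D) (phi : D -> lang S)
  (RR : lang S -> Prop) : Prop :=
  forall L, RR L <-> image_set K phi L.

Definition rational_set (S : finType) (RR : lang S -> Prop) : Prop :=
  exists (D : finType) (K : lang D) (phi : D -> lang S),
    [/\ 0 < #|D|, regular K, nonempty_words K, regular_subst phi
      & represents K phi RR].

Definition dunion (S : finType) (RR : lang S -> Prop) (R : lang S)
  : lang S -> Prop :=
  fun L => exists L0, RR L0 /\ L = lang_union L0 R.

Definition finite_lang_set (S : finType) (RR : lang S -> Prop) : Prop :=
  exists (n : nat) (f : 'I_n -> lang S), forall L, RR L <-> exists i, L = f i.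

(* Main.v *)
Require Import Defs.
From mathcomp Require Import all_boot zify.
From Stdlib Require Import FunctionalExtensionality PropExtensionality IndefiniteDescription.
Set Implicit Arguments. Unset Strict Implicit. Unset Printing Implicit Defensive.

Definition cnt_dfa (A : finType) (P : nat -> bool) : dfa A :=
  @DFA A 'I_3 (inord 0) (fun s => P (val s)) (fun s _ => inord (minn s.+1 2)).

Lemma cnt_run (A : finType) P (w : seq A) :
  val (foldl (@dfa_trans A (cnt_dfa A P)) (@dfa_s0 A (cnt_dfa A P)) w) = minn (size w) 2.
Proof.
elim/last_ind: w => [|w a IH] /=; first by rewrite inordK.
rewrite foldl_rcons /= size_rcons inordK IH //; lia.
Qed.

Lemma regular_size (A : finType) (Q : nat -> Prop) (P : nat -> bool) :
  (forall n, Q n <-> P (minn n 2)) -> regular (fun w : seq A => Q (size w)).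
Proof.
move=> H; exists (cnt_dfa A P) => w; rewrite /dfa_accept; have -> : dfa_fin (foldl (@dfa_trans A (cnt_dfa A P)) (@dfa_s0 A (cnt_dfa A P)) w) = P (minn (size w) 2) by rewrite /= -(cnt_run P). exact: H.
Qed.

Section Union.
Variables (A : finType) (M1 M2 : dfa A).
Definition union_dfa : dfa A :=
  @DFA A (dfa_state M1 * dfa_state M2)%type (dfa_s0 M1, dfa_s0 M2)
    (fun s => dfa_fin s.1 || dfa_fin s.2)
    (fun s a => (dfa_trans s.1 a, dfa_trans s.2 a)).
Lemma union_run (w : seq A) p q :
  foldl (@dfa_trans A union_dfa) (p, q) w =
  (foldl (@dfa_trans A M1) p w, foldl (@dfa_trans A M2) q w).
Proof. by elim: w p q => [|a w IH] p q //=; rewrite IH. Qed.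
End Union.

Lemma regular_union (A : finType) (L1 L2 : lang A) :
  regular L1 -> regular L2 -> regular (lang_union L1 L2).
Proof.
move=> [M1 H1] [M2 H2]; exists (union_dfa M1 M2) => w.
rewrite /dfa_accept /= union_run /= /lang_union H1 H2 /dfa_accept.
by split => [[]->|/orP[]]; rewrite ?orbT; auto.
Qed.

Section Conc.
Variables (A : finType) (M1 M2 : dfa A).
Definition run1 (w : seq A) := foldl (@dfa_trans A M1) (dfa_s0 M1) w.
Definition run2 (w : seq A) := foldl (@dfa_trans A M2) (dfa_s0 M2) w.
Definition cstate := (dfa_state M1 * {set dfa_state M2})%type.
Definition conc_init : cstate :=
  (dfa_s0 M1, if dfa_fin (dfa_s0 M1) then [set dfa_s0 M2] else set0).
Definition conc_trans (s : cstate) (a : A) : cstate :=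
  let p' := dfa_trans s.1 a in
  (p', [set dfa_trans q a | q in s.2] :|: (if dfa_fin p' then [set dfa_s0 M2] else set0)).
Definition conc_dfa : dfa A :=
  @DFA A cstate conc_init (fun s => [exists q in s.2, dfa_fin q]) conc_trans.

Lemma conc_run (w : seq A) :
  (foldl conc_trans conc_init w).1 = run1 w /\
  forall q, q \in (foldl conc_trans conc_init w).2 <->
    exists u v, w = u ++ v /\ dfa_fin (run1 u) /\ q = run2 v.
Proof.
elim/last_ind: w => [|w a [IH1 IH2]].
  split => // q /=; split.
    case E: (dfa_fin (dfa_s0 M1)); last by rewrite in_set0.
    by rewrite in_set1 => /eqP ->; exists [::], [::].
  move=> [u [v [E [H ->]]]]; case: u E H => [|//]; case: v => [|//] _ H.
  by rewrite /run1 /= in H; rewrite H in_set1.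
rewrite foldl_rcons /=; split; first by rewrite IH1 /run1 foldl_rcons.
move=> q; rewrite in_setU; split.
  case/orP.
    case/imsetP => q0 Hq0. move: Hq0 => /(IH2 q0).1 [u [v [-> [Hu ->]]]] ->.
    by exists u, (rcons v a); rewrite rcons_cat /run2 foldl_rcons.
  rewrite IH1; case E: (dfa_fin _); last by rewrite in_set0.
  rewrite in_set1 => /eqP ->; exists (rcons w a), [::].
  by rewrite cats0 /run1 foldl_rcons.
move=> [u [v [Hw [Hu ->]]]].
case/lastP: v Hw => [|v b] Hw.
  rewrite cats0 in Hw; subst u; apply/orP; right.
  by rewrite IH1 -/(run1 _) /run1 -foldl_rcons -/(run1 _) Hu /run2 in_set1.
rewrite -rcons_cat in Hw; case: (rcons_inj Hw) => Ew Eb; subst b.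
apply/orP; left; apply/imsetP; exists (run2 v); last by rewrite /run2 foldl_rcons.
by apply: (proj2 (IH2 _)); exists u, v.
Qed.
End Conc.

Lemma regular_conc (A : finType) (L1 L2 : lang A) :
  regular L1 -> regular L2 -> regular (lang_conc L1 L2).
Proof.
move=> [M1 H1] [M2 H2]; exists (conc_dfa M1 M2) => w.
have [_ H] := conc_run M1 M2 w.
rewrite /dfa_accept /=; split.
  move=> [u [v [Ew [/H1 Hu /H2 Hv]]]]; apply/existsP; exists (run2 M2 v).
  have -> : dfa_fin (run2 M2 v) by exact: Hv.
  by rewrite andbT; apply: (proj2 (H _)); exists u, v.
case/existsP => q /andP [/(proj1 (H _)) [u [v [-> [Hu ->]]]] Hq].
by exists u, v; split => //; split; [apply/H1|apply/H2].
Qed.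

Lemma regular_eps (A : finType) : regular (@lang_eps A).
Proof.
have [M HM] := @regular_size A (fun n => n = 0) (fun m => m == 0)
  (fun n => ltac:(split => [->//|/eqP]; lia)).
exists M => w; rewrite -HM /lang_eps; split => [->//|]; exact: size0nil.
Qed.

Lemma regular_subst_word (D S : finType) (phi : D -> lang S) :
  regular_subst phi -> forall w, regular (subst_word phi w).
Proof.
move=> H; elim => [|d w IH] /=; first exact: regular_eps.
exact: regular_conc.
Qed.

Lemma subst1 (D S : finType) (psi : D -> lang S) d : subst_word psi [:: d] = psi d.
Proof.
apply: functional_extensionality => v; apply: propositional_extensionality.
rewrite /subst_word /= /lang_conc /lang_eps; split.
  by move=> [u [v' [-> [H ->]]]]; rewrite cats0.
by move=> H; exists v, [::]; rewrite cats0.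
Qed.

Definition phi0 : unit -> lang unit := fun _ v => size v = 1.
Definition R0 : lang unit := fun v => size v = 0.

Lemma sw0 (w : seq unit) (v : seq unit) : subst_word phi0 w v <-> size v = size w.
Proof.
elim: w v => [|d w IH] v /=.
  by rewrite /lang_eps; split => [->//|/size0nil].
rewrite /lang_conc; split.
  move=> [x [y [-> [Hx Hy]]]]; have Hx' : size x = 1 := Hx.
  by rewrite size_cat Hx' (proj1 (IH y) Hy).
case: v => [//|b v] /= [Hv]; exists [:: b], v; split => //; split => //.
exact: (proj2 (IH v)).
Qed.

Lemma sw_eps (D S : finType) (psi : D -> lang S) w :
  subst_word psi w [::] -> forall d, d \in w -> psi d [::].
Proof.
elim: w => [|d0 w IH] //= [u [v [E [Hu Hv]]]] d.
case: u E Hu => [|//]; case: v Hv => [|//] Hv _ Hu.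
rewrite in_cons => /orP [/eqP -> //|]; exact: IH.
Qed.

Lemma sw_alleps (D S : finType) (psi : D -> lang S) w :
  (forall d, d \in w -> psi d [::]) -> subst_word psi w [::].
Proof.
elim: w => [|d0 w IH] //= H; exists [::], [::]; split => //; split.
  by apply: H; rewrite mem_head.
by apply: IH => d Hd; apply: H; rewrite in_cons Hd orbT.
Qed.

Lemma sw_sub (D S : finType) (psi : D -> lang S) w :
  (forall d, d \in w -> psi d [::]) ->
  forall d, d \in w -> forall v, psi d v -> subst_word psi w v.
Proof.
elim: w => [|d0 w IH] //= H d.
have H' : forall d, d \in w -> psi d [::].
  by move=> d' Hd; apply: H; rewrite in_cons Hd orbT.
rewrite in_cons => /orP [/eqP ->|Hd] v Hv.
  by exists v, [::]; rewrite cats0; split => //; split => //; apply: sw_alleps.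
exists [::], v; split => //; split; first by apply: H; rewrite mem_head.
exact: (IH H' d Hd v Hv).
Qed.

Lemma sw_ne (D S : finType) (psi : D -> lang S) w x :
  subst_word psi w x -> x <> [::] -> exists d, d \in w /\ exists u, psi d u /\ u <> [::].
Proof.
elim: w x => [|d0 w IH] x /=; first by move=> ->.
move=> [u [v [-> [Hu Hv]]]] Hne.
case: u Hu Hne => [|b u] Hu Hne.
  have [d [Hd Hx]] := IH v Hv Hne.
  by exists d; split => //; rewrite in_cons Hd orbT.
by exists d0; split; [rewrite mem_head | exists (b :: u)].
Qed.

Lemma part1_nonrat :
  ~ rational_set (dunion (image_set (fun w : seq unit => 0 < size w) phi0) R0).
Proof.
move=> [D [K [psi [HD HK Hne Hpsi Hrep]]]].
have claim : forall n, 0 < n -> exists d : D,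
    (exists u, psi d u /\ size u = n) /\ (forall v, psi d v -> size v = n \/ size v = 0).
  move=> n n0.
  have : dunion (image_set (fun w : seq unit => 0 < size w) phi0) R0
           (lang_union (subst_word phi0 (nseq n tt)) R0).
    exists (subst_word phi0 (nseq n tt)); split => //.
    by exists (nseq n tt); rewrite size_nseq.
  move/(proj1 (Hrep _)) => [w [_ E]].
  have HP : forall v, subst_word psi w v <-> size v = n \/ size v = 0.
    move=> v; rewrite -E /lang_union /R0; split.
      by case=> [/sw0|]; rewrite ?size_nseq; auto.
    by case=> [Hv|]; [left; apply/sw0; rewrite size_nseq | right].
  have Heps := sw_eps (proj2 (HP [::]) (or_intror erefl)).
  have Hx : subst_word psi w (nseq n tt) by apply/HP; left; rewrite size_nseq.
  have [d [Hd [u [Hu Hu0]]]] : exists d, d \in w /\ exists u, psi d u /\ u <> [::].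
    apply: (sw_ne Hx); case: n n0 {HP Hx E} => //.
  have Hall : forall v, psi d v -> size v = n \/ size v = 0.
    by move=> v Hv; apply/HP; exact: (sw_sub Heps Hd Hv).
  exists d; split => //; exists u; split => //.
  case: (Hall u Hu) => // /size0nil.
  done.
have F : forall i : 'I_(#|D|.+1), {d : D | (exists u, psi d u /\ size u = i.+1) /\
            (forall v, psi d v -> size v = i.+1 \/ size v = 0)}.
  move=> i; apply: constructive_indefinite_description; exact: claim.
have inj : injective (fun i => proj1_sig (F i)).
  move=> i j /= E; apply: val_inj => /=.
  case: (F i) E => di [[u [Hu Hsu]] _] /=.
  case: (F j) => dj [_ Hj] /= E; subst dj.
  case: (Hj u Hu); rewrite Hsu // => [[]] //.
have := @leq_card _ _ (fun i => sval (F i)) inj; rewrite card_ord ltnn.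
done.
Qed.

Theorem proposition6 :
  (* (1) *)
  (exists (S : finType) (RR : lang S -> Prop) (R : lang S),
      [/\ 0 < #|S|, rational_set RR, regular R
        & ~ rational_set (dunion RR R)])
  /\
  (* (2) *)
  (forall (S : finType) (RR : lang S -> Prop) (R : lang S),
      0 < #|S| -> rational_set RR -> finite_lang_set RR -> regular R ->
      rational_set (dunion RR R))
  /\
  (* (3) *)
  (exists (S D : finType) (phi : D -> lang S) (K : lang D) (R : lang S),
      0 < #|S| /\ 0 < #|D| /\ regular_subst phi /\ regular K /\
      nonempty_words K /\ finite_lang_set (image_set K phi) /\ regular R /\
      ~ exists K' : lang D,
              [/\ regular K', nonempty_words K'
                & represents K' phi (dunion (image_set K phi) R)]).
Proof.
have reg1 : forall A : finType, regular (fun w : seq A => size w = 1).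
  move=> A; apply: (@regular_size A (fun n => n = 1) (fun m => m == 1)).
  move=> n; split => [->//|/eqP]; lia.
have reg0 : forall A : finType, regular (fun w : seq A => size w = 0).
  move=> A; apply: (@regular_size A (fun n => n = 0) (fun m => m == 0)).
  move=> n; split => [->//|/eqP]; lia.
have regF : forall A : finType, regular (fun w : seq A => False).
  move=> A; apply: (@regular_size A (fun n => False) (fun m => false)).
  by move=> n; split.
split.
  exists unit, (image_set (fun w : seq unit => 0 < size w) phi0), R0.
  split; [by rewrite card_unit| |exact: reg0|exact: part1_nonrat].
  exists unit, (fun w : seq unit => 0 < size w), phi0; split; first by rewrite card_unit.
  - apply: (@regular_size unit (fun n => 0 < n) (fun m => 0 < m)).
    move=> n; split => /= H; lia.
  - by move=> w H E; rewrite E in H.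
  - move=> d; exact: reg1.
  - by [].
split.
  move=> S RR R HS [D [K [phi [HD HK Hne Hphi Hrep]]]] [n [f Hf]] HR.
  have Hfreg : forall i, regular (f i).
    move=> i; have : RR (f i) by apply/Hf; exists i.
    move/(proj1 (Hrep _)) => [w [_ ->]]; exact: regular_subst_word.
  case: n f Hf Hfreg => [|m] f Hf Hfreg.
    exists unit, (fun _ : seq unit => False), (fun _ _ => False); split => //; first by rewrite card_unit.
    - move=> L; split; last by move=> [w []].
      move=> [L0 [/Hf [[i Hi] _] _]] //.
  exists 'I_m.+1, (fun w => size w = 1), (fun i => lang_union (f i) R); split => //.
  - by rewrite card_ord.
  - by move=> w H E; rewrite E in H.
  - move=> i; exact: regular_union.
  - move=> L; split.
      move=> [L0 [HL0 ->]]; have [i ->] := proj1 (Hf L0) HL0.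
      by exists [:: i]; rewrite subst1.
    move=> [w [Hw ->]]; case: w Hw => [|i [|j w]] // _.
    rewrite subst1; exists (f i); split => //; apply/Hf; by exists i.
exists unit, unit, phi0, (fun w => size w = 1), R0.
split; first by rewrite card_unit. split; first by rewrite card_unit. split; first by move=> d; exact: reg1.
split; first exact: reg1.
split; first by move=> w H E; rewrite E in H.
split.
  exists 1, (fun _ => subst_word phi0 [:: tt]) => L; split.
    move=> [w [Hw ->]]; exists ord0; case: w Hw => [|[] [|]] //.
  by move=> [_ ->]; exists [:: tt].
split; first exact: reg0.
move=> [K' [_ _ Hrep]].
have : dunion (image_set (fun w : seq unit => size w = 1) phi0) R0
         (lang_union (subst_word phi0 [:: tt]) R0).
  by exists (subst_word phi0 [:: tt]); split => //; exists [:: tt].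
move/(proj1 (Hrep _)) => [w [_ E]].
have h0 : lang_union (subst_word phi0 [:: tt]) R0 [::] by right.
have h1 : lang_union (subst_word phi0 [:: tt]) R0 [:: tt] by left; apply/sw0.
rewrite E in h0 h1.
by move/sw0: h0; move/sw0: h1 => <-.
Qed.
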